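(* In the finite element setting described in the context (linear hexahedral elements for 3D elasticity, $m=24$), let $\beta\ge 0$ and, for each element $e$ with mass $m_e>0$, $$M_e=I_3\otimes \mathrm{M}_e,\quad \mathrm{M}_e=\frac{m_e}{8}I_8,\qquad E_e=I_3\otimes \mathrm{E}_e,\quad \mathrm{E}_e=\frac{\beta m_e}{56}\bigl(8I_8-\mathbf{e}\mathbf{e}^T\bigr),$$ where $\mathbf{e}\in\mathbb{R}^8$ is the vector of all ones (so $\mathrm{E}_e$ has diagonal entries $7\beta m_e/56$ and off-diagonal entries $-\beta m_e/56$), and $\overline{M}_e=M_e+E_e$. Let $M=\sum_eL_e^TM_eL_e$ and $\overline{M}=\sum_eL_e^T\overline{M}_eL_e$. Then for all $i=1,\dots,n$, $$1\le\frac{\omega_i}{\overline{\omega}_i}\le\sqrt{1+\tfrac{8}{7}\beta},\qquad \frac{\kappa(\overline{M})}{\kappa(M)}\le 1+\tfrac{8}{7}\beta,$$ where $\omega_i=\sqrt{\lambda_i(K,M)}$, $\overline{\omega}_i=\sqrt{\lambda_i(K,\overline{M})}$.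
   Context: Finite element setting: there are $n$ global degrees of freedom and $N$ elements, each with $m$ local degrees of freedom. For each element $e$, $L_e\in\mathbb{R}^{m\times n}$ satisfies $L_e^T=[\mathbf{e}_{i_1},\dots,\mathbf{e}_{i_m}]$ for distinct indices $i_1,\dots,i_m$ (columns of $I_n$), and every global index appears for at least one element. Element matrices are assembled as $A=\sum_{e=1}^N L_e^TA_eL_e$. The global stiffness matrix is $K=\sum_e L_e^TK_eL_e$ with each $K_e$ symmetric positive semidefinite, and $K$ is assumed symmetric positive definite. Generalized eigenvalues of a pair are numbered in ascending order. For a symmetric positive definite matrix $A$, $\kappa(A)=\lambda_{\max}(A)/\lambda_{\min}(A)$. $\otimes$ is the Kronecker product. *)

(* Defs.v *)
From HB Require Import structures.
From mathcomp Require Import all_boot all_order all_algebra.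
From mathcomp Require Import mxtens.
Set Implicit Arguments. Unset Strict Implicit. Unset Printing Implicit Defensive.
Import Order.TTheory GRing.Theory Num.Theory.
Local Open Scope ring_scope.

Definition is_sym (R : ringType) n (A : 'M[R]_n) : Prop := A^T = A.

Definition is_psd (R : realFieldType) n (A : 'M[R]_n) : Prop :=
  is_sym A /\ forall x : 'cV[R]_n, 0 <= (x^T *m A *m x) 0 0.

Definition is_spd (R : realFieldType) n (A : 'M[R]_n) : Prop :=
  is_sym A /\ forall x : 'cV[R]_n, x != 0 -> 0 < (x^T *m A *m x) 0 0.

Definition locmx (R : ringType) m n (idx : 'I_m -> 'I_n) : 'M[R]_(m, n) :=
  \matrix_(a, j) (idx a == j)%:R.

Definition assemble (R : ringType) N m n (idx : 'I_N -> 'I_m -> 'I_n)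
  (A : 'I_N -> 'M[R]_m) : 'M[R]_n :=
  \sum_(e < N) (locmx R (idx e))^T *m A e *m locmx R (idx e).

Definition pencil_poly (R : comRingType) n (A B : 'M[R]_n) : {poly R} :=
  \det (\matrix_(i, j) (B i j *: 'X - (A i j)%:P)).

(* s is the list of generalized eigenvalues of the pair (A, B), counted with
   multiplicity (roots of det(A - x B)), numbered in ascending order:
   lambda_{i+1}(A,B) = s`_i. *)
Definition gen_eigs (R : realFieldType) n (A B : 'M[R]_n) (s : seq R) : Prop :=
  [/\ size s = n, sorted <=%R s &
      pencil_poly A B = \det B *: \prod_(x <- s) ('X - x%:P)].

Definition eigs (R : realFieldType) n (A : 'M[R]_n) (s : seq R) : Prop :=
  gen_eigs A 1%:M s.

Definition kappa_of (R : realFieldType) (s : seq R) : R :=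
  s`_(size s).-1 / s`_0.

Definition ones8 (R : ringType) : 'cV[R]_8 := const_mx 1.

Definition Mloc (R : fieldType) (me : R) : 'M[R]_(3 * 8) :=
  (1%:M : 'M[R]_3) *t ((me / 8) *: (1%:M : 'M[R]_8)).

Definition Eloc (R : fieldType) (beta me : R) : 'M[R]_(3 * 8) :=
  (1%:M : 'M[R]_3) *t ((beta * me / 56) *: (8 *: (1%:M : 'M[R]_8) - ones8 R *m (ones8 R)^T)).

(* Main.v *)
Require Import Defs.
From HB Require Import structures.
From mathcomp Require Import all_boot all_order all_algebra.
From mathcomp Require Import mxtens.
From mathcomp Require Import perm fingroup sesquilinear spectral ring lra complex.
Import Order.TTheory GRing.Theory Num.Theory.
Local Open Scope ring_scope.
Set Implicit Arguments. Unset Strict Implicit. Unset Printing Implicit Defensive.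

Section CX.
Variable C : numClosedFieldType.
Local Open Scope sesquilinear_scope.

Lemma ctM m n p (A : 'M[C]_(m, n)) (B : 'M[C]_(n, p)) :
  (A *m B)^t* = B^t* *m A^t*.
Proof. by rewrite trmx_mul map_mxM. Qed.

Lemma ct1 n : (1%:M : 'M[C]_n)^t* = 1%:M.
Proof. by rewrite trmx1 map_mx1. Qed.

Definition hf n (x : 'cV[C]_n) (A : 'M[C]_n) : C := (x^t* *m A *m x) 0 0.

Lemma hf_diag n (T : 'M[C]_n) (d : 'rV[C]_n) x :
  hf x (T^t* *m diag_mx d *m T) =
  \sum_j d 0 j * (((T *m x) j 0)^* * (T *m x) j 0).
Proof.
rewrite /hf.
have -> : x^t* *m (T^t* *m diag_mx d *m T) *m x = (T *m x)^t* *m diag_mx d *m (T *m x).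
  by rewrite ctM !mulmxA.
rewrite mxE; apply: eq_bigr => j _.
by rewrite mul_mx_diag !mxE mulrCA mulrA.
Qed.

Lemma hf_id n (T : 'M[C]_n) x :
  hf x (T^t* *m T) = \sum_j (((T *m x) j 0)^* * (T *m x) j 0).
Proof.
have -> : T^t* *m T = T^t* *m diag_mx (const_mx 1) *m T.
  by rewrite diag_const_mx mulmx1.
by rewrite hf_diag; apply: eq_bigr => j _; rewrite mxE mul1r.
Qed.

Lemma herm_ct n (A : 'M[C]_n) : A \is hermsymmx -> A^t* = A.
Proof. by move/is_hermitianmxP; rewrite expr0 scale1r => <-. Qed.

Lemma KD n (A B : 'M[C]_n) : A \is hermsymmx -> B \is hermsymmx ->
  (forall x, x != 0 -> 0 < hf x B) ->
  exists T : 'M[C]_n, exists d : 'rV[C]_n,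
    [/\ T \in unitmx, A = T^t* *m diag_mx d *m T & B = T^t* *m T].
Proof.
move=> hA hB pB.
have eB : B = invmx (spectralmx B) *m diag_mx (spectral_diag B) *m spectralmx B.
  by apply/orthomx_spectralP; exact: hermitian_normalmx.
set U := spectralmx B in eB; set db := spectral_diag B in eB.
have Uu : U \is unitarymx := spectral_unitarymx B.
have UU : U *m U^t* = 1%:M by apply/unitarymxP.
rewrite (invmx_unitary Uu) in eB.
have db_gt0 j : 0 < db 0 j.
  pose x : 'cV[C]_n := U^t* *m delta_mx j 0.
  have Ux : U *m x = delta_mx j 0 by rewrite mulmxA UU mul1mx.
  have x0 : x != 0.
    apply: contraTneq isT => x0; move: Ux; rewrite x0 mulmx0 => /matrixP/(_ j 0).
    by rewrite !mxE !eqxx /= => /eqP; rewrite eq_sym oner_eq0.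
  have := pB x x0; rewrite eB hf_diag Ux (bigD1 j) //= big1 ?addr0.
  - by rewrite !mxE !eqxx /= conjC1 !mulr1.
  by move=> k kj; rewrite !mxE (negbTE kj) /= conjC0 mul0r mulr0.
pose sq : 'rV[C]_n := \row_j sqrtC (db 0 j).
have sq_ct : (diag_mx sq)^t* = diag_mx sq.
  rewrite tr_diag_mx; apply/matrixP => i j; rewrite !mxE rmorphMn /=.
  rewrite conj_Creal // ger0_real //.
  by rewrite sqrtC_ge0 ltW.
pose S := diag_mx sq *m U.
have eBS : B = S^t* *m S.
  rewrite /S ctM sq_ct -!mulmxA [diag_mx sq *m (diag_mx sq *m U)]mulmxA.
  have -> : diag_mx sq *m diag_mx sq = diag_mx db.
    apply/matrixP => i j; rewrite mul_diag_mx !mxE.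
    case: (i =P j) => [->|ij]; last by rewrite !mulr0n mulr0.
    by rewrite ?eqxx !mulr1n -expr2 sqrtCK.
  by rewrite eB mulmxA.
have Su : S \in unitmx.
  rewrite unitmx_mul spectral_unit andbT unitmxE det_diag.
  apply/unitrPr; exists (\prod_i (sq 0 i)^-1); rewrite -big_split /=.
  apply: big1 => i _; rewrite divff // mxE sqrtC_eq0; exact: lt0r_neq0.
clearbody S.
pose Si := invmx S.
pose A' := Si^t* *m A *m Si.
have hA' : A' \is hermsymmx.
  apply/is_hermitianmxP; rewrite expr0 scale1r /A' !ctM trmxCK (herm_ct hA).
  by rewrite mulmxA.
have eA' : A' = invmx (spectralmx A') *m diag_mx (spectral_diag A') *m spectralmx A'.
  by apply/orthomx_spectralP; exact: hermitian_normalmx.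
set W := spectralmx A' in eA'; set dA := spectral_diag A' in eA'.
have Wu : W \is unitarymx := spectral_unitarymx A'.
have WU : W \in unitmx := spectral_unit A'.
rewrite (invmx_unitary Wu) in eA'.
exists (W *m S), dA; split.
- by rewrite unitmx_mul WU Su.
- have -> : A = S^t* *m A' *m S.
    by rewrite /A' /Si !mulmxA -ctM mulVmx // ct1 mul1mx -mulmxA mulVmx // mulmx1.
  by rewrite eA' ctM !mulmxA.
- rewrite ctM eBS -!mulmxA; congr (_ *m _); rewrite !mulmxA.
  by rewrite -(invmx_unitary Wu) mulVmx // mul1mx.
Qed.

Lemma pen_decomp n (T : 'M[C]_n) (d : 'rV[C]_n) :
  pencil_poly (T^t* *m diag_mx d *m T) (T^t* *m T) =
  \det (T^t* *m T) *: \prod_j ('X - (d 0 j)%:P).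
Proof.
rewrite /pencil_poly.
pose Dp : 'M[{poly C}]_n := diag_mx (\row_j ('X - (d 0 j)%:P)).
have -> : \matrix_(i, j) ((T^t* *m T) i j *: 'X - ((T^t* *m diag_mx d *m T) i j)%:P)
   = map_mx polyC (T^t*) *m Dp *m map_mx polyC T.
  rewrite /Dp !mul_mx_diag.
  apply/matrixP => i j; rewrite !mxE scaler_suml rmorph_sum -sumrB.
  apply: eq_bigr => k _; rewrite !mxE.
  rewrite -!mul_polyC !rmorphM /=. ring.
rewrite !det_mulmx !det_map_mx det_diag -mul_polyC rmorphM /=.
rewrite (eq_bigr (fun j => 'X - (d 0 j)%:P)); last by move=> j _; rewrite mxE.
ring.
Qed.


Lemma rowsE n (s : seq C) (k : 'I_n) : (\row_j s`_j : 'rV[C]_n) 0 k = s`_k.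
Proof. by rewrite mxE. Qed.

Lemma cmp n (A1 B1 A2 B2 T1 T2 : 'M[C]_n) (s1 s2 : seq C) (alpha beta : C)
  (i : 'I_n) :
  size s1 = n -> size s2 = n -> sorted <=%R s1 -> sorted <=%R s2 ->
  A1 = T1^t* *m diag_mx (\row_j s1`_j) *m T1 -> B1 = T1^t* *m T1 ->
  A2 = T2^t* *m diag_mx (\row_j s2`_j) *m T2 -> B2 = T2^t* *m T2 ->
  0 <= alpha -> 0 <= beta -> 0 <= s1`_i ->
  (forall x, hf x A2 <= alpha * hf x A1) ->
  (forall x, hf x B1 <= beta * hf x B2) ->
  (forall x, x != 0 -> 0 < hf x B2) ->
  s2`_i <= alpha * beta * s1`_i.
Proof.
move=> sz1 sz2 so1 so2 eA1 eB1 eA2 eB2 a0 b0 s10 hA hB pB2.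
pose S : 'M[C]_n := \matrix_(k, j)
  (if (i < k)%N then T1 k j else if (k < i)%N then T2 k j else 0).
have dS : \det S^T == 0.
  rewrite det_tr (expand_det_row S i) big1 // => j _.
  by rewrite mxE ltnn mul0r.
have [v v0 vS] := det0P dS.
pose x : 'cV[C]_n := v^T.
have x0 : x != 0 by rewrite /x trmx_eq0.
have Sx : S *m x = 0 by rewrite /x -[S]trmxK -trmx_mul vS trmx0.
have Sk k : (S *m x) k 0 = 0 by rewrite Sx mxE.
have y1 (k : 'I_n) : (i < k)%N -> (T1 *m x) k 0 = 0.
  move=> ik; rewrite -(Sk k) !mxE; apply: eq_bigr => j _; by rewrite [S k j]mxE ik.
have y2 (k : 'I_n) : (k < i)%N -> (T2 *m x) k 0 = 0.
  move=> ki; rewrite -(Sk k) !mxE; apply: eq_bigr => j _.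
  by rewrite [S k j]mxE ki ltnNge ltnW.
have le1 : hf x A1 <= s1`_i * hf x B1.
  rewrite eA1 eB1 hf_diag hf_id mulr_sumr; apply: ler_sum => k _.
  rewrite rowsE; case: (ltnP i k) => ik.
    by rewrite y1 // conjC0 !mul0r !mulr0.
  apply: ler_wpM2r; first by rewrite mulrC mul_conjC_ge0.
  apply: (sorted_leq_nth le_trans lexx) => //; by rewrite inE sz1.
have le2 : s2`_i * hf x B2 <= hf x A2.
  rewrite eA2 eB2 hf_diag hf_id mulr_sumr; apply: ler_sum => k _.
  rewrite rowsE; case: (ltnP k i) => ki.
    by rewrite y2 // conjC0 !mul0r !mulr0.
  apply: ler_wpM2r; first by rewrite mulrC mul_conjC_ge0.
  apply: (sorted_leq_nth le_trans lexx) => //; by rewrite inE sz2.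
have p2 := pB2 x x0.
rewrite -(ler_pM2r p2).
apply: (le_trans le2); apply: (le_trans (hA x)).
rewrite -!mulrA; apply: ler_wpM2l => //.
apply: (le_trans le1).
by rewrite mulrCA; apply: ler_wpM2l.
Qed.

Lemma pos_eig n (A T : 'M[C]_n) (s : seq C) (k : 'I_n) : T \in unitmx ->
  A = T^t* *m diag_mx (\row_j s`_j) *m T ->
  (forall x, x != 0 -> 0 < hf x A) -> 0 < s`_k.
Proof.
move=> uT eA pA.
pose x : 'cV[C]_n := invmx T *m delta_mx k 0.
have Tx : T *m x = delta_mx k 0 by rewrite mulKVmx.
have x0 : x != 0.
  apply: contraTneq isT => x0; move: Tx; rewrite x0 mulmx0 => /matrixP/(_ k 0).
  by rewrite !mxE !eqxx /= => /eqP; rewrite eq_sym oner_eq0.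
have := pA x x0; rewrite eA hf_diag Tx (bigD1 k) //= big1 ?addr0.
- by rewrite !mxE !eqxx /= conjC1 !mulr1.
by move=> j jk; rewrite !mxE (negbTE jk) /= conjC0 mul0r mulr0.
Qed.

End CX.

Section RC.
Variable R : rcfType.
Local Notation C := (R[i]).
Local Notation toC := (real_complex R).
Local Open Scope sesquilinear_scope.

Definition qf n (y : 'cV[R]_n) (P : 'M[R]_n) : R := (y^T *m P *m y) 0 0.

Lemma conj_toC (r : R) : (toC r)^* = toC r.
Proof. by apply: conj_Creal; apply/complex_realP; exists r. Qed.

Lemma ct_toC m n (A : 'M[R]_(m, n)) : (map_mx toC A)^t* = map_mx toC A^T.
Proof. by apply/matrixP => i j; rewrite !mxE conj_toC. Qed.

Lemma decompC n (x : 'cV[C]_n) :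
  x = map_mx toC (map_mx (@complex.Re R) x) + 'i *: map_mx toC (map_mx (@complex.Im R) x).
Proof.
apply/matrixP => i j; rewrite !mxE -complexiE.
by rewrite {1}[x i j]complexE.
Qed.

Lemma ctD m n (A B : 'M[C]_(m, n)) : (A + B)^t* = A^t* + B^t*.
Proof. by apply/matrixP => i j; rewrite !mxE rmorphD. Qed.

Lemma ctZ m n (c : C) (A : 'M[C]_(m, n)) : (c *: A)^t* = c^* *: A^t*.
Proof. by apply/matrixP => i j; rewrite !mxE rmorphM. Qed.

Lemma qf_toC n (P : 'M[R]_n) (a b : 'cV[R]_n) :
  ((map_mx toC a)^T *m map_mx toC P *m map_mx toC b) 0 0 = toC ((a^T *m P *m b) 0 0).
Proof. by rewrite map_trmx -!map_mxM mxE. Qed.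

Lemma hf_real n (P : 'M[R]_n) (x : 'cV[C]_n) : P^T = P ->
  hf x (map_mx toC P) =
  toC (qf (map_mx (@complex.Re R) x) P + qf (map_mx (@complex.Im R) x) P).
Proof.
move=> sP; set a := map_mx _ x; set b := map_mx _ x.
rewrite /hf {1 2}(decompC x) -/a -/b.
rewrite ctD ctZ conjCi !ct_toC.
rewrite !(mulmxDl, mulmxDr) -!scalemxAl -!scalemxAr -!map_mxM.
have sym : (b^T *m P *m a) 0 0 = (a^T *m P *m b) 0 0.
  have tr : (a^T *m P *m b)^T = b^T *m P *m a by rewrite !trmx_mul trmxK sP mulmxA.
  by rewrite -tr mxE.
rewrite [LHS]mxE [RHS]mxE in sym.
have hi (z : C) : -'i * ('i * z) = z.
  by rewrite mulrA mulNr -expr2 sqrCi opprK mul1r.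
rewrite /qf !mxE /= hi sym rmorphD /=; ring.
Qed.

Lemma herm_toC n (P : 'M[R]_n) : P^T = P -> map_mx toC P \is hermsymmx.
Proof. by move=> sP; apply/is_hermitianmxP; rewrite expr0 scale1r ct_toC sP. Qed.

Lemma pd_toC n (P : 'M[R]_n) : is_spd P -> forall x, x != 0 -> 0 < hf x (map_mx toC P).
Proof.
case=> sP pP x x0; rewrite hf_real // -(rmorph0 toC) ltcR.
set a := map_mx _ x; set b := map_mx _ x.
have ge y : 0 <= qf y P.
  by have [->|y0] := eqVneq y 0; [rewrite /qf mulmx0 mxE | exact/ltW/pP].
have [a0|a0] := eqVneq a 0; last by apply: ltr_pwDl (pP _ a0) (ge _) => //; rewrite addrC.
have [b0|b0] := eqVneq b 0; last by rewrite addrC; apply: ltr_pwDl (pP _ b0) (ge _).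
case/eqP: x0; rewrite (decompC x) -/a -/b a0 b0.
by rewrite !(map_mx0 toC) scaler0 addr0.
Qed.

Lemma le_toC n (P Q : 'M[R]_n) (c : R) : P^T = P -> Q^T = Q ->
  (forall y, qf y P <= c * qf y Q) ->
  forall x, hf x (map_mx toC P) <= toC c * hf x (map_mx toC Q).
Proof.
move=> sP sQ h x; rewrite !hf_real // -rmorphM lecR mulrDr.
by apply: lerD.
Qed.


Lemma pencil_map n (A B : 'M[R]_n) :
  pencil_poly (map_mx toC A) (map_mx toC B) = map_poly toC (pencil_poly A B).
Proof.
rewrite /pencil_poly -det_map_mx; congr (\det _).
apply/matrixP => i j; rewrite !mxE rmorphB /= map_polyZ map_polyX map_polyC.
by [].
Qed.

Lemma perm_decomp n (T0 : 'M[C]_n) (d : 'rV[C]_n) (p : {perm 'I_n}) :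
  (row_perm p T0)^t* *m diag_mx (\row_k d 0 (p k)) *m row_perm p T0
  = T0^t* *m diag_mx d *m T0.
Proof.
rewrite !mul_mx_diag; apply/matrixP => i j; rewrite !mxE.
rewrite [RHS](reindex_inj (@perm_inj _ p)); apply: eq_bigr => k _.
by rewrite !mxE.
Qed.

Lemma perm_id n (T0 : 'M[C]_n) (p : {perm 'I_n}) :
  (row_perm p T0)^t* *m row_perm p T0 = T0^t* *m T0.
Proof.
apply/matrixP => i j; rewrite !mxE.
rewrite [RHS](reindex_inj (@perm_inj _ p)); apply: eq_bigr => k _.
by rewrite !mxE.
Qed.

Lemma eig_decomp n (A B : 'M[R]_n) (s : seq R) :
  A^T = A -> is_spd B -> gen_eigs A B s ->
  exists T : 'M[C]_n, [/\ T \in unitmx,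
    map_mx toC A = T^t* *m diag_mx (\row_j (map toC s)`_j) *m T &
    map_mx toC B = T^t* *m T].
Proof.
move=> sA pB [sz so eP].
have [T0 [d [uT0 eA eB]]] := KD (herm_toC sA) (herm_toC pB.1) (pd_toC pB).
have dB0 : \det (map_mx toC B) != 0.
  rewrite eB det_mulmx mulf_neq0 //.
  by rewrite det_map_mx det_tr conjC_eq0 -unitfE -unitmxE.
have hp : \prod_(x <- map toC s) ('X - x%:P) = \prod_j ('X - (d 0 j)%:P).
  apply: (scalerI dB0).
  rewrite [in RHS]eB -pen_decomp -eA -eB pencil_map eP.
  rewrite map_polyZ det_map_mx rmorph_prod big_map; congr (_ *: _).
  by apply: eq_bigr => x _; rewrite rmorphB /= map_polyX map_polyC.
pose t : n.-tuple C := [tuple d 0 j | j < n].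
have : perm_eq (map toC s) t.
  apply: prod_XsubC_eq; rewrite hp big_tuple.
  by apply: eq_bigr => j _; rewrite tnth_mktuple.
case/tuple_permP => p ep.
exists (row_perm p T0); split.
  by rewrite row_permE unitmx_mul unitmx_perm.
  have -> : (\row_j (map toC s)`_j : 'rV[C]_n) = \row_k d 0 (p k).
    by apply/rowP => k; rewrite !mxE ep (nth_mktuple _ _ k) tnth_mktuple.
  by rewrite perm_decomp.
by rewrite perm_id.
Qed.


Lemma nth_toC (s : seq R) k : (map toC s)`_k = toC s`_k.
Proof.
have [ks|ks] := ltnP k (size s); first by rewrite (nth_map 0).
by rewrite !nth_default ?size_map // rmorph0.
Qed.

Lemma posR n (A B : 'M[R]_n) (s : seq R) (k : 'I_n) :
  is_spd A -> is_spd B -> gen_eigs A B s -> 0 < s`_k.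
Proof.
move=> pA pB ge; have [T [uT eA eB]] := eig_decomp pA.1 pB ge.
have := pos_eig k uT eA (pd_toC pA).
by rewrite nth_toC -(rmorph0 toC) ltcR.
Qed.

Lemma cmpR n (A1 B1 A2 B2 : 'M[R]_n) (s1 s2 : seq R) (alpha beta : R) (i : 'I_n) :
  is_spd A1 -> A2^T = A2 -> is_spd B1 -> is_spd B2 ->
  gen_eigs A1 B1 s1 -> gen_eigs A2 B2 s2 -> 0 <= alpha -> 0 <= beta ->
  (forall y, qf y A2 <= alpha * qf y A1) ->
  (forall y, qf y B1 <= beta * qf y B2) ->
  s2`_i <= alpha * beta * s1`_i.
Proof.
move=> pA1 sA2 pB1 pB2 g1 g2 a0 b0 hA hB.
have s10 := posR i pA1 pB1 g1.
have [T1 [_ eA1 eB1]] := eig_decomp pA1.1 pB1 g1.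
have [T2 [_ eA2 eB2]] := eig_decomp sA2 pB2 g2.
have [sz1 so1 _] := g1; have [sz2 so2 _] := g2.
have hom : {homo toC : x y / x <= y >-> x <= y} by move=> x y h; rewrite lecR.
have := @cmp _ n _ _ _ _ T1 T2 (map toC s1) (map toC s2) (toC alpha) (toC beta) i
  _ _ _ _ eA1 eB1 eA2 eB2.
move=> H; rewrite -lecR !rmorphM /=; rewrite !nth_toC in H; apply: H.
- by rewrite size_map.
- by rewrite size_map.
- exact: (homo_sorted hom).
- exact: (homo_sorted hom).
- by rewrite -(rmorph0 toC) lecR.
- by rewrite -(rmorph0 toC) lecR.
- by rewrite -(rmorph0 toC) lecR ltW.
- by apply: le_toC => //; exact: pA1.1.
- by apply: le_toC => //; [exact: pB1.1 | exact: pB2.1].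
- exact: pd_toC.
Qed.

End RC.

Section FE.
Variable R : rcfType.


Lemma qfD n (y : 'cV[R]_n) A B : qf y (A + B) = qf y A + qf y B.
Proof. by rewrite /qf mulmxDr mulmxDl mxE. Qed.

Lemma qfZ n (y : 'cV[R]_n) a A : qf y (a *: A) = a * qf y A.
Proof. by rewrite /qf -scalemxAr -scalemxAl mxE. Qed.

Lemma qfB n (y : 'cV[R]_n) A B : qf y (A - B) = qf y A - qf y B.
Proof. by rewrite qfD -scaleN1r qfZ mulN1r. Qed.

Lemma qf_sum n (y : 'cV[R]_n) I (r : seq I) (F : I -> 'M[R]_n) :
  qf y (\sum_(i <- r) F i) = \sum_(i <- r) qf y (F i).
Proof. by rewrite /qf mulmx_sumr mulmx_suml summxE. Qed.

Lemma qf_gram n m (y : 'cV[R]_n) (X : 'M[R]_(m, n)) : 0 <= qf y (X^T *m X).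
Proof.
rewrite /qf mulmxA -trmx_mul -mulmxA mxE; apply: sumr_ge0 => i _.
by rewrite mxE -expr2 sqr_ge0.
Qed.

Lemma qf1 n (y : 'cV[R]_n) : qf y 1%:M = \sum_i y i 0 ^+ 2.
Proof. by rewrite /qf mulmx1 mxE; apply: eq_bigr => i _; rewrite mxE expr2. Qed.

Lemma qf_assemble N m n (idx : 'I_N -> 'I_m -> 'I_n) (A : 'I_N -> 'M[R]_m) y :
  qf y (assemble idx A) = \sum_e qf (locmx R (idx e) *m y) (A e).
Proof.
rewrite /assemble qf_sum; apply: eq_bigr => e _.
by rewrite /qf trmx_mul !mulmxA.
Qed.

Lemma sym_assemble N m n (idx : 'I_N -> 'I_m -> 'I_n) (A : 'I_N -> 'M[R]_m) :
  (forall e, (A e)^T = A e) -> (assemble idx A)^T = assemble idx A.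
Proof.
move=> sA; rewrite /assemble raddf_sum /=; apply: eq_bigr => e _.
by rewrite !trmx_mul trmxK sA mulmxA.
Qed.

Local Notation G X := ((1%:M : 'M[R]_3) *t (X : 'M[R]_8)).

Lemma GD (X Y : 'M[R]_8) : G (X + Y) = G X + G Y.
Proof. by apply/matrixP => i j; rewrite !mxE mulrDr. Qed.

Lemma GZ a (X : 'M[R]_8) : G (a *: X) = a *: G X.
Proof. by apply/matrixP => i j; rewrite !mxE mulrCA. Qed.

Lemma GN (X : 'M[R]_8) : G (- X) = - G X.
Proof. by apply/matrixP => i j; rewrite !mxE mulrN. Qed.

Lemma GM (X Y : 'M[R]_8) : G X *m G Y = G (X *m Y).
Proof. by rewrite tensmx_mul mul1mx. Qed.

Lemma GT (X : 'M[R]_8) : (G X)^T = G (X^T).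
Proof. by rewrite trmx_tens trmx1. Qed.

Lemma G1 : G 1%:M = 1%:M.
Proof.
apply/matrixP => i j.
case: (mxtens_indexP i) => i1 i2; case: (mxtens_indexP j) => j1 j2.
rewrite tensmxE !mxE (inj_eq (can_inj (@mxtens_indexK _ _))) xpair_eqE.
by case: (i1 == j1); case: (i2 == j2); rewrite /= ?mulr1 ?mulr0 ?mul0r.
Qed.

Definition J8 : 'M[R]_8 := ones8 R *m (ones8 R)^T.

Lemma J8T : J8^T = J8.
Proof. by rewrite /J8 trmx_mul trmxK. Qed.

Lemma J8J8 : J8 *m J8 = 8 *: J8.
Proof.
have ee : (ones8 R)^T *m ones8 R = (8 : R)%:M.
  apply/matrixP => i j; rewrite !mxE (ord1 i) (ord1 j) /=.
  rewrite (eq_bigr (fun _ => 1)); last by move=> k _; rewrite !mxE mulr1.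
  by rewrite sumr_const card_ord.
by rewrite /J8 mulmxA -[X in X *m _]mulmxA ee mul_mx_scalar scalemxAl.
Qed.

Lemma Mloc_E (me : R) : Mloc me = (me / 8) *: 1%:M.
Proof. by rewrite /Mloc GZ G1. Qed.

Lemma Eloc_E (beta me : R) :
  Eloc beta me = (beta * me / 56) *: (8 *: 1%:M - G J8).
Proof. by rewrite /Eloc GZ GD GN GZ G1. Qed.

Lemma qf_GJ8 (z : 'cV[R]_(3 * 8)) : 0 <= qf z (G J8).
Proof.
have -> : G J8 = 8^-1 *: ((G J8)^T *m G J8).
  by rewrite GT GM J8T J8J8 GZ scalerA mulVf ?scale1r // pnatr_eq0.
by rewrite qfZ mulr_ge0 ?qf_gram // invr_ge0.
Qed.

Lemma qf_8mJ (z : 'cV[R]_(3 * 8)) : 0 <= qf z (8 *: 1%:M - G J8).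
Proof.
pose Q : 'M[R]_8 := 1%:M - 8^-1 *: J8.
have QT : Q^T = Q.
  by rewrite /Q raddfB /= trmx1 linearZ /= J8T.
have QQ : Q^T *m Q = Q.
  rewrite QT /Q mulmxBl mulmxBr mulmx1 mul1mx mulmxBr mulmx1 -scalemxAr -scalemxAl J8J8 !scalerA.
  by apply/matrixP => i j; rewrite !mxE; field.
have -> : 8 *: 1%:M - G J8 = 8 *: ((G Q)^T *m G Q).
  by rewrite GT GM QQ /Q GD GN GZ G1 scalerBr scalerA mulfV ?scale1r // pnatr_eq0.
by rewrite qfZ mulr_ge0 ?qf_gram.
Qed.

Lemma MlocT (me : R) : (Mloc me)^T = Mloc me.
Proof. by rewrite Mloc_E linearZ /= trmx1. Qed.

Lemma ElocT (beta me : R) : (Eloc beta me)^T = Eloc beta me.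
Proof. by rewrite Eloc_E linearZ /= raddfB /= linearZ /= trmx1 GT J8T. Qed.

Lemma qf_Eloc_ge0 (beta me : R) z : 0 <= beta -> 0 < me -> 0 <= qf z (Eloc beta me).
Proof.
move=> b0 m0; rewrite Eloc_E qfZ mulr_ge0 ?qf_8mJ //.
by rewrite divr_ge0 // mulr_ge0 // ltW.
Qed.

Lemma qf_Eloc_le (beta me : R) z : 0 <= beta -> 0 < me ->
  qf z (Eloc beta me) <= 8 / 7 * beta * (me / 8 * qf z 1%:M).
Proof.
move=> b0 m0; rewrite Eloc_E qfZ qfB qfZ.
have h1 := qf_GJ8 z.
have h2 : 0 <= beta * me / 56 by rewrite divr_ge0 // mulr_ge0 // ltW.
have -> : 8 / 7 * beta * (me / 8 * qf z 1%:M) = beta * me / 56 * (8 * qf z 1%:M).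
  by field.
rewrite ler_wpM2l //; lra.
Qed.

Lemma sumsq_ge0 m (z : 'cV[R]_m) : 0 <= \sum_b z b 0 ^+ 2.
Proof. by apply: sumr_ge0 => b _; rewrite sqr_ge0. Qed.

Lemma sumsq_gt0 m (z : 'cV[R]_m) a : z a 0 != 0 -> 0 < \sum_b z b 0 ^+ 2.
Proof.
move=> za; rewrite (bigD1 a) //=.
have h1 : 0 < z a 0 ^+ 2 by rewrite lt0r sqr_ge0 andbT sqrf_eq0.
have h2 : 0 <= \sum_(b | b != a) z b 0 ^+ 2 by apply: sumr_ge0 => b _; rewrite sqr_ge0.
lra.
Qed.

End FE.

Unset Implicit Arguments.

Theorem mainTheorem6 (R : rcfType) (n N : nat)
  (idx : 'I_N -> 'I_(3 * 8) -> 'I_n)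
  (Ke : 'I_N -> 'M[R]_(3 * 8)) (me : 'I_N -> R) (beta : R)
  (sKM sKMb sM sMb : seq R) :
  (forall e, injective (idx e)) ->
  (forall j : 'I_n, exists e, exists a, idx e a = j) ->
  (forall e, is_psd (Ke e)) ->
  is_spd (assemble idx Ke) ->
  (forall e, 0 < me e) ->
  0 <= beta ->
  let K := assemble idx Ke in
  let M := assemble idx (fun e => Mloc (me e)) in
  let Mb := assemble idx (fun e => Mloc (me e) + Eloc beta (me e)) in
  gen_eigs K M sKM ->
  gen_eigs K Mb sKMb ->
  eigs M sM ->
  eigs Mb sMb ->
  (forall i : 'I_n,
     1 <= Num.sqrt sKM`_i / Num.sqrt sKMb`_i /\
     Num.sqrt sKM`_i / Num.sqrt sKMb`_i <= Num.sqrt (1 + 8 / 7 * beta)) /\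
  kappa_of sMb / kappa_of sM <= 1 + 8 / 7 * beta.
Proof.
move=> inj surj psdK spdK me0 b0 K M Mb gKM gKMb gM gMb.
set c := 1 + 8 / 7 * beta.
have c1 : 1 <= c.
  have : 0 <= 8 / 7 * beta by rewrite mulr_ge0 // divr_ge0.
  rewrite /c; lra.
have c0 : 0 <= c by lra.
have sKe : K^T = K := spdK.1.
have symM : M^T = M by apply: sym_assemble => e; exact: MlocT.
have symMb : Mb^T = Mb.
  by apply: sym_assemble => e; rewrite linearD /= MlocT ElocT.
have qM y : qf y M = \sum_e me e / 8 * qf (locmx R (idx e) *m y) 1%:M.
  by rewrite /M qf_assemble; apply: eq_bigr => e _; rewrite Mloc_E qfZ.
have qMb y : qf y Mb = qf y M + \sum_e qf (locmx R (idx e) *m y) (Eloc beta (me e)).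
  by rewrite /Mb /M !qf_assemble -big_split; apply: eq_bigr => e _; rewrite qfD.
have le1 y : qf y M <= 1 * qf y Mb.
  rewrite mul1r qMb.
  have : 0 <= \sum_e qf (locmx R (idx e) *m y) (Eloc beta (me e)).
    by apply: sumr_ge0 => e _; apply: qf_Eloc_ge0.
  lra.
have le2 y : qf y Mb <= c * qf y M.
  have hE : \sum_e qf (locmx R (idx e) *m y) (Eloc beta (me e)) <= 8 / 7 * beta * qf y M.
    rewrite qM mulr_sumr; apply: ler_sum => e _; exact: qf_Eloc_le.
  rewrite qMb /c; lra.
have pdM : is_spd M.
  split => // y y0; change (0 < qf y M).
  have : ~~ [forall j, y j 0 == 0].
    apply: contra y0 => /forallP h; apply/eqP/matrixP => j k.
    by rewrite (ord1 k) mxE; exact/eqP/h.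
  rewrite negb_forall => /existsP [j yj].
  have [e [a ea]] := surj j.
  rewrite qM (bigD1 e) //=.
  have h1 : 0 < me e / 8 * qf (locmx R (idx e) *m y) 1%:M.
    rewrite mulr_gt0 ?divr_gt0 // qf1; apply: (@sumsq_gt0 _ _ _ a).
    rewrite mxE (bigD1 j) //= big1 ?addr0.
      by rewrite mxE ea eqxx mul1r.
    by move=> k kj; rewrite mxE ea eq_sym (negbTE kj) mul0r.
  have h2 : 0 <= \sum_(e0 | e0 != e) me e0 / 8 * qf (locmx R (idx e0) *m y) 1%:M.
    apply: sumr_ge0 => e0 _; apply: mulr_ge0; first by rewrite divr_ge0 // ltW.
    rewrite qf1; exact: sumsq_ge0.
  lra.
have pdMb : is_spd Mb.
  split => // y y0; change (0 < qf y Mb).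
  have h2 : 0 < qf y M := pdM.2 y y0.
  have := le1 y; rewrite mul1r; lra.
have pd1 : is_spd (1%:M : 'M[R]_n).
  split; first exact: trmx1.
  move=> y y0; change (0 < qf y 1%:M).
  have : ~~ [forall j, y j 0 == 0].
    apply: contra y0 => /forallP h; apply/eqP/matrixP => j k.
    by rewrite (ord1 k) mxE; exact/eqP/h.
  rewrite negb_forall => /existsP [j yj].
  by rewrite qf1; apply: (@sumsq_gt0 _ _ _ j).
have r1 y : qf y K <= 1 * qf y K by rewrite mul1r.
have r2 y : qf y (1%:M : 'M[R]_n) <= 1 * qf y 1%:M by rewrite mul1r.
have H1 (i : 'I_n) : sKMb`_i <= sKM`_i.
  by have := cmpR i spdK sKe pdM pdMb gKM gKMb ler01 ler01 r1 le1; rewrite !mul1r.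
have H2 (i : 'I_n) : sKM`_i <= c * sKMb`_i.
  by have := cmpR i spdK sKe pdMb pdM gKMb gKM ler01 c0 r1 le2; rewrite !mul1r.
have H3 (i : 'I_n) : sMb`_i <= c * sM`_i.
  by have := cmpR i pdM symMb pd1 pd1 gM gMb c0 ler01 le2 r2; rewrite !mulr1.
have H4 (i : 'I_n) : sM`_i <= sMb`_i.
  by have := cmpR i pdMb symM pd1 pd1 gMb gM ler01 ler01 le1 r2; rewrite !mul1r.
split.
  move=> i.
  have pa := posR i spdK pdM gKM; have pb := posR i spdK pdMb gKMb.
  have sb : 0 < Num.sqrt sKMb`_i by rewrite sqrtr_gt0.
  split.
    by rewrite ler_pdivlMr // mul1r ler_sqrt // ?ltW // H1.
  rewrite ler_pdivrMr // -sqrtrM //.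
  by rewrite ler_sqrt ?H2 // mulr_ge0 // ltW.
case: (gM) => szM _ _; case: (gMb) => szMb _ _.
rewrite /kappa_of szM szMb.
have [n0|npos] := posnP n.
  by rewrite !nth_default ?szM ?szMb ?n0 // !mul0r.
pose i0 : 'I_n := Ordinal npos.
have hl : (n.-1 < n)%N by rewrite ltn_predL.
pose il : 'I_n := Ordinal hl.
have x0 := posR i0 pdMb pd1 gMb; have xl := posR il pdMb pd1 gMb.
have y0 := posR i0 pdM pd1 gM; have yl := posR il pdM pd1 gM.
have h3 := H3 il; have h4 := H4 i0; rewrite /= in x0 xl y0 yl h3 h4.
have -> : sMb`_n.-1 / sMb`_0 / (sM`_n.-1 / sM`_0) =
          (sMb`_n.-1 / sM`_n.-1) * (sM`_0 / sMb`_0).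
  by field; rewrite !gt_eqF.
rewrite -[c]mulr1; apply: ler_pM.
- by rewrite divr_ge0 // ltW.
- by rewrite divr_ge0 // ltW.
- by rewrite ler_pdivrMr.
- by rewrite ler_pdivrMr // mul1r.
Qed.
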